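(* Let $S$ be a regular semigroup with zero $0$, and let $e,f$ be idempotents of $S$. Then $ef=0$ if and only if $M(e,f)=\{0\}$.
   Context: A semigroup is regular if for every $x$ there is $y$ with $xyx=x$. For idempotents $e,f$ of $S$, $M(e,f)=\{g \text{ idempotent in } S: ge=g \text{ and } fg=g\}$. *)

(* Defs.v *)
Definition associative {S : Type} (mul : S -> S -> S) : Prop :=
  forall x y z, mul x (mul y z) = mul (mul x y) z.

Definition is_zero {S : Type} (mul : S -> S -> S) (z : S) : Prop :=
  forall x, mul z x = z /\ mul x z = z.

Definition regular {S : Type} (mul : S -> S -> S) : Prop :=
  forall x, exists y, mul (mul x y) x = x.

Definition idempotent {S : Type} (mul : S -> S -> S) (e : S) : Prop :=
  mul e e = e.

Definition Mset {S : Type} (mul : S -> S -> S) (e f : S) (g : S) : Prop :=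
  idempotent mul g /\ mul g e = g /\ mul f g = g.

(* Main.v *)
Require Import Defs.

Theorem lemma2p2 (S : Type) (mul : S -> S -> S) (zero : S)
  (Hassoc : associative mul) (Hzero : is_zero mul zero) (Hreg : regular mul)
  (e f : S) (He : idempotent mul e) (Hf : idempotent mul f) :
  mul e f = zero <-> (forall g, Mset mul e f g <-> g = zero).
Proof.
  unfold associative, is_zero, regular, idempotent, Mset in *.
  split.
  - intros Hef g. split.
    + intros [Hgg [Hge Hfg]].
      transitivity (mul (mul g e) (mul f g)).
      * rewrite Hge, Hfg; symmetry; exact Hgg.
      * rewrite <- Hassoc, (Hassoc e f g), Hef.
        destruct (Hzero g) as [H1 _]. rewrite H1. apply Hzero.
    + intros ->. destruct (Hzero zero) as [H0 _].
      split; [exact H0|]. split; apply Hzero.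
  - intros HM.
    destruct (Hreg (mul e f)) as [y Hy].
    assert (K : forall X, mul e (mul f (mul y (mul e (mul f X)))) = mul e (mul f X)).
    { intro X. transitivity (mul (mul (mul (mul e f) y) (mul e f)) X);
      [ repeat rewrite <- Hassoc; reflexivity | rewrite Hy, <- Hassoc; reflexivity ]. }
    assert (Ke : forall X, mul e (mul e X) = mul e X) by (intro X; rewrite Hassoc, He; reflexivity).
    assert (Kf : forall X, mul f (mul f X) = mul f X) by (intro X; rewrite Hassoc, Hf; reflexivity).
    assert (K0 : mul e (mul f (mul y (mul e f))) = mul e f).
    { transitivity (mul (mul (mul e f) y) (mul e f)); [repeat rewrite <- Hassoc; reflexivity | exact Hy]. }
    set (g := mul f (mul y (mul e (mul f (mul y e))))).
    assert (Hg : g = zero).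
    { apply HM. unfold g. split; [|split].
      - unfold idempotent. repeat rewrite <- Hassoc. rewrite !K. reflexivity.
      - repeat rewrite <- Hassoc. rewrite He. reflexivity.
      - repeat rewrite <- Hassoc. rewrite Kf. reflexivity. }
    transitivity (mul e (mul g f)).
    + unfold g. repeat rewrite <- Hassoc. rewrite !K.
      rewrite K0. reflexivity.
    + rewrite Hg. destruct (Hzero f) as [H1 _]. rewrite H1. apply Hzero.
Qed.
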